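(* Let integers $r\ge1$, $n_i\ge1$, $l_{ij}\ge1$, $d_{ij}$ be as in the context. (i) For $0\le i\le r$ and $1\le j,j'\le n_i$ there exist integers $\alpha,\beta$ with $\nu(i,j,j')=\alpha\,\hat\nu(i,j)-\beta\,\hat\nu(i,j')$. (ii) For $0\le i_0\le r$ and $1\le j_i\le n_i$ ($i=0,\dots,r$) there exist integers $\beta_0,\dots,\beta_r$ with \[ \mu(j_0,\dots,j_r)=\beta_{i_0}\,\mu(j_0,\dots,j_{i_0-1},n_{i_0},j_{i_0+1},\dots,j_r)+\sum_{i_1\ne i_0}\beta_{i_1}\,\hat\nu(i_0,j_{i_0})\prod_{i\notin\{i_0,i_1\}}l_{ij_i}. \]
   Context: Integers $r\ge1$, $n_0,\dots,n_r\ge1$, $l_{ij}\in\mathbb{Z}_{\ge1}$, $d_{ij}\in\mathbb{Z}$ ($0\le i\le r$, $1\le j\le n_i$) with $\gcd(l_{ij},d_{ij})=1$ and $d_{i1}/l_{i1}>\dots>d_{in_i}/l_{in_i}$. Define $\mu(j_0,\dots,j_r)=\sum_{i_0=0}^r d_{i_0j_{i_0}}\prod_{i\ne i_0}l_{ij_i}$, $\nu(i,j,j')=l_{ij}d_{ij'}-l_{ij'}d_{ij}$ and $\hat\nu(i,j)=\nu(i,j,n_i)$. *)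

(* Defs.v *)
From mathcomp Require Import all_boot all_order all_algebra.
Set Implicit Arguments. Unset Strict Implicit. Unset Printing Implicit Defensive.
Import Order.TTheory GRing.Theory Num.Theory.
Local Open Scope ring_scope.

(* Data: indices i in {0..r} and j in {1..n i} are natural numbers;
   l d : nat -> nat -> int give l_{ij}, d_{ij} (values outside range irrelevant). *)

Definition mu (r : nat) (l d : nat -> nat -> int) (js : nat -> nat) : int :=
  \sum_(i0 < r.+1) d i0 (js i0) * \prod_(i < r.+1 | i != i0) l i (js i).

Definition nu (l d : nat -> nat -> int) (i j j' : nat) : int :=
  l i j * d i j' - l i j' * d i j.

Definition nuhat (n : nat -> nat) (l d : nat -> nat -> int) (i j : nat) : int :=
  nu l d i j (n i).

(* Main.v *)
Require Import Defs.
From mathcomp Require Import all_boot all_order all_algebra.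
From mathcomp Require Import ring.
Import Order.TTheory GRing.Theory Num.Theory.
Local Open Scope ring_scope.

Lemma decomp r l d (js : nat -> nat) (i0 : nat) (Hi0 : (i0 <= r)%N) :
 mu r l d js = d i0 (js i0) * \prod_(k < r.+1 | (k : nat) != i0) l k (js k)
   + l i0 (js i0) * \sum_(i < r.+1 | (i : nat) != i0) d i (js i) *
        \prod_(k < r.+1 | ((k : nat) != i0) && (k != i)) l k (js k).
Proof.
pose i0o : 'I_r.+1 := Ordinal (Hi0 : (i0 < r.+1)%N).
rewrite /mu (bigD1 i0o) //=; congr (_ + _).
rewrite big_distrr /=; apply: eq_bigr => i Hi.
rewrite (bigD1 i0o) /=; last by rewrite eq_sym.
rewrite mulrCA; congr (_ * (_ * _)); apply: eq_bigl => k; by rewrite andbC.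
Qed.

Theorem lemma4p9 (r : nat) (n : nat -> nat) (l d : nat -> nat -> int) :
  (1 <= r)%N ->
  (forall i, (i <= r)%N -> (1 <= n i)%N) ->
  (forall i j, (i <= r)%N -> (1 <= j <= n i)%N -> 1 <= l i j) ->
  (forall i j, (i <= r)%N -> (1 <= j <= n i)%N -> gcdz (l i j) (d i j) = 1) ->
  (forall i j, (i <= r)%N -> (1 <= j)%N -> (j < n i)%N ->
     (d i j)%:~R / (l i j)%:~R > (d i j.+1)%:~R / (l i j.+1)%:~R :> rat) ->
  (* (i) *)
  (forall i j j', (i <= r)%N -> (1 <= j <= n i)%N -> (1 <= j' <= n i)%N ->
     exists alpha beta : int,
       nu l d i j j' = alpha * nuhat n l d i j - beta * nuhat n l d i j') /\
  (* (ii) *)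
  (forall (i0 : nat) (js : nat -> nat), (i0 <= r)%N ->
     (forall i, (i <= r)%N -> (1 <= js i <= n i)%N) ->
     exists beta : nat -> int,
       mu r l d js =
         beta i0 * mu r l d (fun i => if i == i0 then n i0 else js i)
         + \sum_(i1 < r.+1 | (i1 : nat) != i0)
             beta i1 * nuhat n l d i0 (js i0)
               * \prod_(i < r.+1 | ((i : nat) != i0) && (i != i1)) l i (js i)).
Proof.
move=> Hr Hn Hl Hg _.
have Bz : forall i, (i <= r)%N -> exists u v : int, u * l i (n i) + v * d i (n i) = 1.
  move=> i Hi; have [u [v Huv]] := Bezoutz (l i (n i)) (d i (n i)).
  by exists u, v; rewrite Huv; apply: Hg => //; rewrite ?Hn // ?leqnn.
split.
  move=> i j j' Hi _ _; have [u [v Huv]] := Bz i Hi.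
  exists (u * l i j' + v * d i j'), (u * l i j + v * d i j).
  rewrite /nuhat /nu.
  rewrite -[LHS]mul1r -Huv; ring.
move=> i0 js Hi0 Hjs.
have [u [v Huv]] := Bz i0 Hi0.
have Hk : ((i0 == 0%N) < r.+1)%N by case: (i0 == 0%N).
pose k : 'I_r.+1 := Ordinal Hk.
have kne : (k : nat) != i0 by rewrite /=; case: i0 {Hi0 Hk k Huv} => [|[|m]].
exists (fun i : nat => if i == i0 then u * l i0 (js i0) + v * d i0 (js i0)
   else v * d i (js i) - (if i == (k : nat) then u * l k (js k) else 0)).
rewrite (decomp r l d js i0 Hi0) (decomp r l d _ i0 Hi0) eqxx.
have E1 : \prod_(k0 < r.+1 | (k0 : nat) != i0)
      l k0 (if (k0 : nat) == i0 then n i0 else js k0) =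
      \prod_(k0 < r.+1 | (k0 : nat) != i0) l k0 (js k0).
  by apply: eq_bigr => x /negbTE ->.
have E2 : \sum_(i < r.+1 | (i : nat) != i0)
    d i (if (i:nat) == i0 then n i0 else js i) *
    \prod_(k0 < r.+1 | ((k0 : nat) != i0) && (k0 != i))
       l k0 (if (k0:nat) == i0 then n i0 else js k0) =
   \sum_(i < r.+1 | (i : nat) != i0) d i (js i) *
    \prod_(k0 < r.+1 | ((k0 : nat) != i0) && (k0 != i)) l k0 (js k0).
  apply: eq_bigr => x /negbTE ->; congr (_ * _).
  by apply: eq_bigr => y /andP[/negbTE -> _].
rewrite E1 E2.
set Q := \prod_(_ < _ | _) _.
set S := \sum_(_ < _ | _) _.
have EQ : Q = l k (js k) * \prod_(k0 < r.+1 | ((k0 : nat) != i0) && (k0 != k)) l k0 (js k0).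
  by rewrite /Q (bigD1 k).
set nh := nuhat n l d i0 (js i0).
set P := fun i1 : 'I_r.+1 => \prod_(i < r.+1 | ((i : nat) != i0) && (i != i1)) l i (js i).
have ES : \sum_(i1 < r.+1 | (i1 : nat) != i0)
     (if (i1 : nat) == i0
      then u * l i0 (js i0) + v * d i0 (js i0)
      else v * d i1 (js i1) - (if (i1 : nat) == k then u * l k (js k) else 0)) *
     nh * P i1 =
   \sum_(i1 < r.+1 | (i1 : nat) != i0) (nh * (v * (d i1 (js i1) * P i1)))
   - \sum_(i1 < r.+1 | (i1 : nat) != i0) (if i1 == k then nh * (u * (l k (js k) * P k)) else 0).
  rewrite -sumrB; apply: eq_bigr => i /negbTE ->.
  case: (i =P k) => [->|/eqP ne]; first (rewrite ?eqxx; ring).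
  have -> : ((i : nat) == k) = false by apply/negbTE.
  ring.
have E3 : \sum_(i1 < r.+1 | (i1 : nat) != i0) (if i1 == k then nh * (u * (l k (js k) * P k)) else 0)
   = nh * (u * (l k (js k) * P k)).
  rewrite (bigD1 k) // eqxx big1 => [|i /andP[_ /negbTE ->] //]; by rewrite /= addr0.
rewrite ES E3 -!mulr_sumr /P -/S -EQ /nh /nuhat /nu.
rewrite -[LHS]mul1r -Huv; ring.
Qed.
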